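(* Let $\phi\colon\mathbb{N}\to(0,\infty)$ be an arbitrary function and let $$R(\phi)=\{x\in\mathbb{I}\colon R_n(x)\ge\phi(n)\text{ for infinitely many }n\}.$$ Then $\mathcal{L}(R(\phi))=1$ if $\sum_{n=1}^\infty\frac{1}{\phi(n)}=\infty$, and $\mathcal{L}(R(\phi))=0$ if $\sum_{n=1}^\infty\frac{1}{\phi(n)}<\infty$.
   Context: $\mathcal{L}$ is Lebesgue measure on $(0,1)$, $\mathbb{I}=(0,1)\setminus\mathbb{Q}$. Signed Engel expansion: define $T\colon[0,1)\to[0,1)$ by: for $k\in\mathbb{N}$, $Tx=\lceil 1/x\rceil x-1$ if $x\in(\frac{1}{2k},\frac{1}{2k-1})$; $Tx=1-\lfloor 1/x\rfloor x$ if $x\in(\frac{1}{2k+1},\frac{1}{2k})$; $Tx=0$ if $x\in\{0\}\cup\{1/n\colon n\ge 2\}$. For $x\in(0,1)$, $d_1(x)=\lceil 1/x\rceil$ if $x\in[\frac{1}{2k},\frac{1}{2k-1})$ for some $k\in\mathbb{N}$, and $d_1(x)=\lfloor 1/x\rfloor$ if $x\in[\frac{1}{2k+1},\frac{1}{2k})$ for some $k\in\mathbb{N}$; $d_{n+1}(x)=d_1(T^nx)$ (defined for all $n$ when $x$ is irrational). For $x\in\mathbb{I}$, $R_1(x)=d_1(x)$ and $R_n(x)=d_n(x)/d_{n-1}(x)$ for $n\ge2$. *)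

(* Defs.v *)
From HB Require Import structures.
From mathcomp Require Import all_boot all_order all_algebra.
From mathcomp Require Import all_classical all_reals all_analysis.
Set Implicit Arguments. Unset Strict Implicit. Unset Printing Implicit Defensive.
Import Order.TTheory GRing.Theory Num.Theory.
Local Open Scope classical_set_scope.
Local Open Scope ring_scope.

Section SignedEngel.
Variable R : realType.

Definition in_odd_open (x : R) : Prop :=
  exists k : nat, (0 < k)%N /\ (k.*2%:R)^-1 < x /\ x < ((k.*2).-1%:R)^-1.
Definition in_even_open (x : R) : Prop :=
  exists k : nat, (0 < k)%N /\ ((k.*2).+1%:R)^-1 < x /\ x < (k.*2%:R)^-1.
Definition in_odd_halfopen (x : R) : Prop :=
  exists k : nat, (0 < k)%N /\ (k.*2%:R)^-1 <= x /\ x < ((k.*2).-1%:R)^-1.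

(* The signed Engel map T (defined for all reals; only [0,1) matters:
   on {0} u {1/n : n >= 2} it is 0, as in the paper). *)
Definition sengelT (x : R) : R :=
  if `[< in_odd_open x >] then (Num.ceil (x^-1))%:~R * x - 1
  else if `[< in_even_open x >] then 1 - (Num.floor (x^-1))%:~R * x
  else 0.

Definition sengel_d1 (x : R) : R :=
  if `[< in_odd_halfopen x >] then (Num.ceil (x^-1))%:~R
  else (Num.floor (x^-1))%:~R.

(* d_n(x) = d_1(T^(n-1) x) for n >= 1 (value at n = 0 is irrelevant) *)
Definition sengel_d (n : nat) (x : R) : R := sengel_d1 (iter n.-1 sengelT x).

Definition sengel_R (n : nat) (x : R) : R :=
  if (n <= 1)%N then sengel_d 1 x else sengel_d n x / sengel_d n.-1 x.

Definition irr01 : set R :=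
  [set x | 0 < x < 1 /\ ~ (exists q : rat, x = ratr q)].

Definition Rset (phi : nat -> R) : set R :=
  [set x | irr01 x /\
     (forall N : nat, exists n : nat, (N < n)%N /\ phi n <= sengel_R n x)].

End SignedEngel.

(* Main.v *)
Require Import Defs.
From mathcomp Require Import all_boot all_order all_algebra.
From mathcomp Require Import all_classical all_reals all_analysis.
Import Order.TTheory GRing.Theory Num.Theory.
Local Open Scope classical_set_scope.
Local Open Scope ring_scope.
From mathcomp Require Import measurable_realfun.
From mathcomp Require Import zify ring lra.
Set Implicit Arguments. Unset Strict Implicit. Unset Printing Implicit Defensive.

Section Aux.
Variable R : realType.

Definition od (k : nat) : R := ((k.*2).-1)%:R.
Definition irr (y : R) : Prop := ~ exists q : rat, y = ratr q.

Lemma dblE (k : nat) : ((k.*2)%:R : R) = 2 * k%:R.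
Proof. by rewrite -muln2 natrM mulrC. Qed.

Lemma odE (k : nat) : (0 < k)%N -> od k = 2 * k%:R - 1.
Proof. move=> k0; rewrite /od -subn1 natrB ?dblE //; lia. Qed.

Lemma odS (k : nat) : od k.+1 = 2 * k%:R + 1.
Proof. by rewrite /od doubleS /= -natr1 dblE. Qed.

Lemma od_ge1 (k : nat) : (0 < k)%N -> 1 <= od k.
Proof. move=> k0; rewrite /od (ler_nat R 1); lia. Qed.

Lemma od_gt0 (k : nat) : (0 < k)%N -> 0 < od k.
Proof. move=> k0; rewrite /od ltr0n; lia. Qed.

Lemma od_le (a b : nat) : (a <= b)%N -> od a <= od b.
Proof. move=> ab; rewrite /od ler_nat; lia. Qed.

Lemma nat_lt_z (a b : nat) (z : R) : a%:R < z -> z < b%:R -> (a < b)%N.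
Proof. by move=> h1 h2; rewrite -(ltr_nat R); exact: lt_trans h1 h2. Qed.

Lemma nat_lt_z' (a b : nat) (z : R) : a%:R < z -> z <= b%:R -> (a < b)%N.
Proof. by move=> h1 h2; rewrite -(ltr_nat R); exact: lt_le_trans h1 h2. Qed.

Lemma L1 (o z : R) : 0 < o -> o < z -> z < o + 1 ->
  0 < (o + 1) * z^-1 - 1 < o^-1.
Proof.
move=> o0 oz zo; have z0 : 0 < z by apply: lt_trans oz.
apply/andP; split.
  have -> : (o + 1) * z^-1 - 1 = (o + 1 - z) / z by field; rewrite gt_eqF.
  by apply: divr_gt0 => //; rewrite subr_gt0.
rewrite -subr_gt0.
have -> : o^-1 - ((o + 1) * z^-1 - 1) = (o + 1) * (z - o) / (o * z).
  by field; rewrite !gt_eqF.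
by apply: divr_gt0; [apply: mulr_gt0; [lra|rewrite subr_gt0]|apply: mulr_gt0].
Qed.

Lemma L2 (e z : R) : 0 < e -> e < z -> z < e + 1 ->
  0 < 1 - e * z^-1 < (e + 1)^-1.
Proof.
move=> e0 ez ze; have z0 : 0 < z by apply: lt_trans ez.
apply/andP; split.
  have -> : 1 - e * z^-1 = (z - e) / z by field; rewrite gt_eqF.
  by apply: divr_gt0 => //; rewrite subr_gt0.
rewrite -subr_gt0.
have -> : (e + 1)^-1 - (1 - e * z^-1) = e * (e + 1 - z) / ((e + 1) * z).
  by field; rewrite !gt_eqF //; lra.
by apply: divr_gt0; [apply: mulr_gt0; [|rewrite subr_gt0]|apply: mulr_gt0 => //; lra].
Qed.

Lemma ratr_inv_nat (n : nat) : ratr (n%:R^-1 : rat) = (n%:R : R)^-1.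
Proof. by rewrite fmorphV rmorph_nat. Qed.

Lemma odD (k : nat) : (0 < k)%N -> od k = (k.*2)%:R - 1.
Proof. by move=> k0; rewrite odE // dblE. Qed.

Lemma odSD (k : nat) : od k.+1 = (k.*2)%:R + 1.
Proof. by rewrite odS dblE. Qed.

Lemma intr_posz (n : nat) : ((Posz n)%:~R : R) = n%:R.
Proof. by rewrite -pmulrn. Qed.

Lemma ceil_nat (c : nat) (z : R) : (0 < c)%N -> (c.-1)%:R < z -> z <= c%:R -> Num.ceil z = Posz c.
Proof.
move=> c0 h1 h2; apply: ceil_def; apply/andP; split.
  have -> : ((Posz c - 1)%:~R : R) = (c.-1)%:R by rewrite intrB -!pmulrn -natrB ?subn1 //; lia.
  done.
by rewrite -pmulrn.
Qed.
Lemma floor_nat (c : nat) (z : R) : c%:R <= z -> z < c.+1%:R -> Num.floor z = Posz c.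
Proof.
move=> h1 h2; apply: floor_def; apply/andP; split.
  by rewrite -pmulrn.
have -> : ((Posz c + 1)%:~R : R) = (c.+1)%:R by rewrite intrD -!pmulrn -natrD addn1.
done.
Qed.

Lemma nat_contra (j k : nat) : ((j.*2).-1 < (k.*2).+1)%N -> (k.*2 < j.*2)%N -> False.
Proof. lia. Qed.

Lemma pos_dbl1 (j : nat) : (0 < j)%N -> (0 < (j.*2).-1)%N.
Proof. lia. Qed.

Lemma parity (n k0 : nat) : (0 < k0)%N -> ((k0.*2).-1 < n.+1)%N ->
  (exists k, [/\ (k0 <= k)%N, (k.*2).-1 = n & k.*2 = n.+1]) \/
  (exists k, (k0 <= k)%N /\ k.*2 = n).
Proof.
move=> k00 h; have hodd := odd_double_half n.
case/boolP: (odd n) => on.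
- left; exists n./2.+1; move: hodd; rewrite on /=; split; lia.
- right; exists n./2; move: hodd; rewrite (negbTE on) /=; split; lia.
Qed.

Lemma digit (y : R) (k0 : nat) : (0 < k0)%N -> irr y -> 0 < y -> y < (od k0)^-1 ->
  exists k, [/\ (k0 <= k)%N, sengel_d1 y = (k.*2)%:R, irr (sengelT y) &
   ((0 < sengelT y < (od k)^-1 /\ y = (k.*2)%:R^-1 * sengelT y + (k.*2)%:R^-1) \/
    (0 < sengelT y < (od k.+1)^-1 /\ y = - (k.*2)%:R^-1 * sengelT y + (k.*2)%:R^-1))].
Proof.
move=> k00 iy y0 yk0.
set z := y^-1.
have z0 : 0 < z by rewrite invr_gt0.
have yz : y = z^-1 by rewrite invrK.
have posy : y \is Num.pos by rewrite posrE.
have od0 := od_gt0 k00.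
have hz : od k0 < z by move: yk0; rewrite invf_pgt ?posrE.
have [n /andP[hn1 hn2]] : exists n : nat, n%:R <= z < n.+1%:R.
  by exists (Num.truncn z); exact: truncn_itv (ltW z0).
have hnz : n%:R != z.
  by apply/eqP => e; apply: iy; exists (n%:R^-1); rewrite yz -e ratr_inv_nat.
have hn : n%:R < z by rewrite lt_neqAle hnz hn1.
have k0n : ((k0.*2).-1 < n.+1)%N by apply: (nat_lt_z (z := z)).
have [[k [k0k e1 e2]] | [k [k0k e1]]] := parity k00 k0n.
- rewrite -e2 in hn2; rewrite -e1 in hn.
  clear e1 e2 hnz hn1; move: hn hn2 => hk1 hk2.
  have k0' : (0 < k)%N by apply: leq_trans k0k.
  have c0 : 0 < ((k.*2)%:R : R) by rewrite ltr0n; lia.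
  have c1 : 0 < (((k.*2).-1)%:R : R) by rewrite ltr0n; lia.
  have c2 : 0 < (((k.*2).+1)%:R : R) by rewrite ltr0n; lia.
  have ioo : in_odd_open y.
    rewrite /in_odd_open /in_odd_halfopen /in_even_open; exists k; split => //; split; first by rewrite invf_plt ?posrE.
    by rewrite invf_pgt ?posrE.
  have ioh : in_odd_halfopen y.
    rewrite /in_odd_open /in_odd_halfopen /in_even_open; exists k; split => //; split; first by rewrite ltW // invf_plt ?posrE.
    by rewrite invf_pgt ?posrE.
  have ce : Num.ceil z = Posz (k.*2).
    by apply: ceil_nat; [lia| |exact: ltW].
  have Te : sengelT y = (k.*2)%:R * y - 1.
    by rewrite /sengelT asboolT // ce intr_posz.
  exists k; split => //.
  + by rewrite /sengel_d1 asboolT // ce intr_posz.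
  + rewrite Te => -[q hq]; apply: iy.
    exists ((k.*2)%:R^-1 * q + (k.*2)%:R^-1).
    rewrite rmorphD rmorphM /= ratr_inv_nat -hq; field.
    by rewrite gt_eqF.
  + left; rewrite Te; split.
      have e : ((k.*2)%:R : R) = od k + 1 by rewrite odD // subrK.
      rewrite e yz; apply: L1; [exact: od_gt0|by rewrite /od|by rewrite -e].
    by field; rewrite gt_eqF.
- rewrite -e1 in hn hn2; clear e1 hnz hn1; move: hn hn2 => hk1 hk2.
  have k0' : (0 < k)%N by apply: leq_trans k0k.
  have c0 : 0 < ((k.*2)%:R : R) by rewrite ltr0n; lia.
  have c1 : 0 < (((k.*2).-1)%:R : R) by rewrite ltr0n; lia.
  have c2 : 0 < (((k.*2).+1)%:R : R) by rewrite ltr0n; lia.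
  have nioo : ~ in_odd_open y.
    move=> [j [j0 [h1 h2]]].
    have cj0 : 0 < ((j.*2)%:R : R) by rewrite ltr0n double_gt0.
    have cj1 : 0 < (((j.*2).-1)%:R : R) by rewrite ltr0n; exact: pos_dbl1 j0.
    move: h1 h2; rewrite invf_plt ?posrE // invf_pgt ?posrE // => h1 h2.
    exact: nat_contra (nat_lt_z h2 hk2) (nat_lt_z hk1 h1).
  have nioh : ~ in_odd_halfopen y.
    move=> [j [j0 [h1 h2]]].
    have cj0 : 0 < ((j.*2)%:R : R) by rewrite ltr0n double_gt0.
    have cj1 : 0 < (((j.*2).-1)%:R : R) by rewrite ltr0n; exact: pos_dbl1 j0.
    move: h1 h2; rewrite invf_ple ?posrE // invf_pgt ?posrE // => h1 h2.
    exact: nat_contra (nat_lt_z h2 hk2) (nat_lt_z' hk1 h1).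
  have ieo : in_even_open y.
    rewrite /in_odd_open /in_odd_halfopen /in_even_open; exists k; split => //; split; first by rewrite invf_plt ?posrE.
    by rewrite invf_pgt ?posrE.
  have fe : Num.floor z = Posz (k.*2).
    by apply: floor_nat => //; exact: ltW.
  have Te : sengelT y = 1 - (k.*2)%:R * y.
    by rewrite /sengelT asboolF // asboolT // fe intr_posz.
  exists k; split => //.
  + by rewrite /sengel_d1 asboolF // fe intr_posz.
  + rewrite Te => -[q hq]; apply: iy.
    exists (- (k.*2)%:R^-1 * q + (k.*2)%:R^-1).
    rewrite rmorphD rmorphM /= rmorphN /= ratr_inv_nat -hq; field.
    by rewrite gt_eqF.
  + right; rewrite Te; split.
      rewrite odSD yz; apply: L2 => //.
      by rewrite natr1.
    by field; rewrite gt_eqF.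
Qed.

End Aux.


Section B.
Variable R : realType.

Lemma od1 : od R 1 = 1. Proof. by rewrite /od. Qed.

Lemma odinv_le1 (k : nat) : (0 < k)%N -> (od R k)^-1 <= 1.
Proof. by move=> k0; rewrite invf_le1 ?od_ge1 ?od_gt0. Qed.

Lemma yk1 (y : R) : y < 1 -> y < (od R 1)^-1.
Proof. by rewrite od1 invr1. Qed.

Lemma step_ok (y : R) : irr y -> 0 < y < 1 ->
  irr (sengelT y) /\ 0 < sengelT y < 1.
Proof.
move=> iy /andP[y0 y1].
have [k [k1 _ iT [[/andP[h1 h2] _]|[/andP[h1 h2] _]]]] := digit (k0:=1) isT iy y0 (yk1 y1).
- split => //; rewrite h1 /=; apply: lt_le_trans h2 _; exact: odinv_le1.
- split => //; rewrite h1 /=; apply: lt_le_trans h2 _; exact: odinv_le1.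
Qed.

Lemma iter_ok (x : R) (m : nat) : irr x -> 0 < x < 1 ->
  irr (iter m (@sengelT R) x) /\ 0 < iter m (@sengelT R) x < 1.
Proof.
move=> ix x01; elim: m => [|m [IH1 IH2]] //=.
exact: step_ok.
Qed.

Lemma d1_ge2 (y : R) : irr y -> 0 < y < 1 -> 2 <= sengel_d1 y.
Proof.
move=> iy /andP[y0 y1].
have [k [k1 -> _ _]] := digit (k0:=1) isT iy y0 (yk1 y1).
by rewrite (ler_nat R 2); lia.
Qed.

Lemma d_mono (y : R) : irr y -> 0 < y < 1 -> sengel_d1 y <= sengel_d1 (sengelT y).
Proof.
move=> iy /andP[y0 y1].
have [k [k1 -> iT [[/andP[h1 h2] _]|[/andP[h1 h2] _]]]] := digit (k0:=1) isT iy y0 (yk1 y1).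
- have [j [kj -> _ _]] := digit (k0:=k) k1 iT h1 h2.
  by rewrite ler_nat; lia.
- have [j [kj -> _ _]] := digit (k0:=k.+1) isT iT h1 h2.
  by rewrite ler_nat; lia.
Qed.

Fixpoint Cyl (P : nat -> R -> R -> Prop) (n : nat) (D : R) {struct n} : set R :=
  match n with
  | 0 => setT
  | n'.+1 => [set y | irr y /\ P 0%N D (sengel_d1 y) /\
              Cyl (fun m => P m.+1) n' (sengel_d1 y) (sengelT y)]
  end.

Definition dprev (D : R) (m : nat) (x : R) : R :=
  if m is m'.+1 then sengel_d1 (iter m' (@sengelT R) x) else D.

Lemma link (n : nat) : forall P D (x : R), irr x -> 0 < x < 1 ->
  (forall m, (m < n)%N -> P m (dprev D m x) (sengel_d1 (iter m (@sengelT R) x))) ->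
  Cyl P n D x.
Proof.
elim: n => [//|n IH] P D x ix x01 H /=.
split => //; split; first exact: (H 0%N).
have [iT T01] := step_ok ix x01.
apply: IH => // m mn.
have := H m.+1 mn; rewrite iterSr.
case: m mn => [|m] _ h; first exact: h.
have e : dprev (sengel_d1 x) m.+1 (sengelT x) = dprev D m.+2 x.
  by rewrite /= -iterS iterSr.
by rewrite e.
Qed.

Lemma sengel_RE (m : nat) (x : R) :
  sengel_R m.+1 x = sengel_d1 (iter m (@sengelT R) x) / dprev 1 m x.
Proof.
rewrite /sengel_R /sengel_d; case: m => [|m] /=; first by rewrite divr1.
by [].
Qed.

Lemma dprev_ge1 (m : nat) (x : R) : irr x -> 0 < x < 1 -> 1 <= dprev 1 m x.
Proof.
move=> ix x01; case: m => [|m] //=.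
have [i1 i2] := iter_ok m ix x01.
by apply: le_trans (d1_ge2 i1 i2); rewrite ler1n.
Qed.

Lemma R_ge1 (m : nat) (x : R) : irr x -> 0 < x < 1 -> 1 <= sengel_R m.+1 x.
Proof.
move=> ix x01; rewrite sengel_RE.
have p0 : 0 < dprev 1 m x by apply: lt_le_trans (dprev_ge1 m ix x01).
rewrite ler_pdivlMr // mul1r.
case: m p0 => [|m] p0 /=.
  have [i1 i2] := iter_ok 0 ix x01.
  by apply: le_trans (d1_ge2 i1 i2); rewrite ler1n.
have [i1 i2] := iter_ok m ix x01.
exact: d_mono i1 i2.
Qed.

End B.


Section C.
Variable R : realType.
Local Open Scope ereal_scope.
Local Notation lam := (@lebesgue_measure R).

Lemma lamE (A : set R) : lam A = ((@wlength R idfun)^*)%mu A.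
Proof. reflexivity. Qed.

Lemma lam_le (A B : set R) : A `<=` B -> lam A <= lam B.
Proof. by move=> AB; rewrite !lamE; exact: (le_outer_measure ((@wlength R idfun)^*)%mu). Qed.

Lemma lam_sig (F : nat -> set R) : lam (\bigcup_n F n) <= \sum_(n <oo) lam (F n).
Proof. by rewrite lamE; exact: (outer_measure_sigma_subadditive ((@wlength R idfun)^*)%mu). Qed.

Lemma lam_U2 (A B : set R) : lam (A `|` B) <= lam A + lam B.
Proof. by rewrite !lamE; exact: (outer_measureU2 ((@wlength R idfun)^*)%mu). Qed.

Lemma lam_ge0 (A : set R) : 0 <= lam A.
Proof. by rewrite lamE; exact: (outer_measure_ge0 ((@wlength R idfun)^*)%mu). Qed.

Lemma lam0 : lam set0 = 0.
Proof. by rewrite lamE; exact: (outer_measure0 ((@wlength R idfun)^*)%mu). Qed.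

Lemma lam_oo (a : R) : (0 <= a)%R -> lam `]0%R, a[%classic = a%:E.
Proof.
move=> a0; rewrite lebesgue_measure_itv /= lte_fin.
case: ltP => h; first by rewrite -EFinD subr0.
by apply/eqP; rewrite eq_sym eqe; apply/eqP/le_anti; rewrite a0 h.
Qed.

Lemma wl_oo (a b : R) : wlength idfun `]a, b[%classic = (if (a < b)%R then (b - a)%:E else 0).
Proof. by rewrite wlength_itv /= lte_fin; case: ifP. Qed.

Lemma lam_affine (al be : R) (S : set R) : al != 0%R ->
  lam ((fun z => al * z + be)%R @` S) <= (`|al|)%:E * lam S.
Proof.
move=> al0.
have alp : (0 < `|al|)%R by rewrite normr_gt0.
set g := (fun z => al * z + be)%R.
have key : forall F, open_itv_cover S F ->
    lam (g @` S) <= (`|al|)%:E * \sum_(k <oo) wlength idfun (F k).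
  move=> F [Fo SF].
  pose ab k := projT1 (cid (Fo k)).
  have Fk k : F k = `](ab k).1, (ab k).2[%classic by rewrite /ab; case: cid.
  pose cen k := (al * (((ab k).1 + (ab k).2) / 2) + be)%R.
  pose rad k := (`|al| * (((ab k).2 - (ab k).1) / 2))%R.
  pose G k := `](cen k - rad k)%R, (cen k + rad k)%R[%classic.
  rewrite lamE outer_measure_open_itv_cover.
  apply: (@le_trans _ _ (\sum_(k <oo) wlength idfun (G k))).
    apply: ereal_inf_lbound; exists G => //; split.
      by move=> k; exists ((cen k - rad k)%R, (cen k + rad k)%R).
    move=> _ [s Ss <-]; have [k _ Fks] := SF s Ss.
    exists k => //; rewrite /G /cen /rad /= in_itv /=; rewrite Fk /= in_itv /= in Fks.
    move: Fks; set a := (ab k).1; set b := (ab k).2 => /andP[h1 h2].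
    rewrite -ltr_distl.
    have -> : (g s - (al * ((a + b) / 2) + be) = al * (s - (a + b) / 2))%R.
      by rewrite /g; ring.
    rewrite normrM ltr_pM2l //; rewrite ltr_distl; apply/andP; split; lra.
  rewrite -nneseriesZl; last by move=> i _; exact: wlength_ge0.
  apply: lee_nneseries; first by move=> i _ _; exact: wlength_ge0.
  move=> k _; rewrite /G /cen /rad Fk !wl_oo.
  set a := (ab k).1; set b := (ab k).2.
  set c := (al * ((a + b) / 2) + be)%R; set r := (`|al| * ((b - a) / 2))%R.
  have E : ((c - r) < (c + r))%R = (a < b)%R.
    rewrite -subr_gt0; have -> : (c + r - (c - r) = `|al| * (b - a))%R.
      by rewrite /c /r; field.
    by rewrite pmulr_rgt0 // subr_gt0.
  rewrite E; case: ifP => h; last by rewrite mule0.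
  rewrite -EFinM lee_fin le_eqVlt; apply/orP; left; apply/eqP.
  by rewrite /c /r; field.
have h : ((`|al|)^-1)%:E * lam (g @` S) <=
         ereal_inf [set \sum_(k <oo) wlength idfun (F k) | F in open_itv_cover S].
  apply: le_ereal_inf_tmp => _ [F hF <-].
  rewrite -(@lee_pmul2l _ (`|al|)%:E) // ?lte_fin //.
  rewrite muleA -EFinM mulfV ?gt_eqF // mul1e.
  exact: key.
rewrite [lam S]lamE outer_measure_open_itv_cover.
have -> : lam (g @` S) = (`|al|)%:E * (((`|al|)^-1)%:E * lam (g @` S)).
  by rewrite muleA -EFinM mulfV ?gt_eqF // mul1e.
apply: lee_wpmul2l => //; exact: ltW.
Qed.

End C.


Section D.
Variable R : realType.
Local Notation lam := (@lebesgue_measure R).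

Lemma eseries_le_bound (u : nat -> R) (b : R) : (forall k, 0 <= u k) ->
  (forall M, \sum_(k < M) u k <= b) -> (\sum_(k <oo) (u k)%:E <= b%:E)%E.
Proof.
move=> u0 ub.
have nd : nondecreasing_seq (fun n => \sum_(0 <= k < n) (u k)%:E)%E.
  by apply: ereal_nondecreasing_series => k _ _; rewrite lee_fin.
rewrite (cvg_lim _ (ereal_nondecreasing_cvgn nd)) //.
apply: ge_ereal_sup => _ [n _ <-] /=.
by rewrite sumEFin lee_fin big_mkord.
Qed.

Definition lenk (k : nat) : R := (od R k)^-1 - (od R k.+1)^-1.

Lemma lenk_ge0 (k : nat) : (0 < k)%N -> 0 <= lenk k.
Proof.
move=> k0; rewrite /lenk subr_ge0 lef_pV2 ?posrE ?od_gt0 //.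
exact: od_le.
Qed.

Lemma lenk_split (k : nat) : (0 < k)%N ->
  ((k.*2)%:R^-1 * (od R k)^-1 + (k.*2)%:R^-1 * (od R k.+1)^-1 = lenk k :> R).
Proof.
move=> k0; rewrite /lenk odE // odS dblE.
have kp : 0 < (k%:R : R) by rewrite ltr0n.
have k1 : 1 <= (k%:R : R) by rewrite ler1n.
field; apply/and3P; split; apply: lt0r_neq0; lra.
Qed.

Lemma cyl_bound (n : nat) : forall (P : nat -> R -> R -> Prop) (q : nat -> R),
  (forall m, 0 <= q m) ->
  (forall m k0 D, (0 < k0)%N -> k0%:R <= D <= (k0.*2)%:R -> forall M,
     \sum_(k < M) (if `[< (k0 <= k)%N /\ P m D (k.*2)%:R >] then lenk k else 0)
       <= q m * (od R k0)^-1) ->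
  forall k0 D, (0 < k0)%N -> k0%:R <= D <= (k0.*2)%:R ->
  (lam (Cyl P n D `&` `]0%R, ((od R k0)^-1)%R[%classic) <=
     ((\prod_(m < n) q m) * (od R k0)^-1)%:E)%E.
Proof.
elim: n => [|n IH] P q q0 hq k0 D k00 hD.
  rewrite big_ord0 mul1r.
  apply: (le_trans (lam_le (@subIsetr _ _ _))).
  by rewrite lam_oo // invr_ge0 ltW // od_gt0.
set a := (od R k0)^-1.
pose P' := fun m => P m.+1.
pose q' := fun m => q m.+1.
have IH' := IH P' q' (fun m => q0 m.+1) (fun m => hq m.+1).
set Pi := \prod_(m < n) q' m in IH'.
have Pi0 : 0 <= Pi by apply: prodr_ge0 => m _; exact: q0.
pose cond k := `[< (k0 <= k)%N /\ P 0%N D (k.*2)%:R >].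
pose Ao k := if cond k then (fun z => ((k.*2)%:R)^-1 * z + ((k.*2)%:R)^-1) @`
   (Cyl P' n (k.*2)%:R `&` `]0%R, (od R k)^-1[%classic) else set0.
pose Ae k := if cond k then (fun z => - ((k.*2)%:R)^-1 * z + ((k.*2)%:R)^-1) @`
   (Cyl P' n (k.*2)%:R `&` `]0%R, (od R k.+1)^-1[%classic) else set0.
have sub : Cyl P n.+1 D `&` `]0%R, a[%classic `<=` \bigcup_k (Ao k `|` Ae k).
  move=> y [[iy [Py Cy]]]; rewrite /= in_itv /= => /andP[y0 ya].
  have [k [k0k dy iT [[/andP[T0 T1] ye]|[/andP[T0 T1] ye]]]] := digit k00 iy y0 ya.
  - exists k => //; left; rewrite /Ao /cond asboolT; last by split => //; rewrite -dy.
    exists (sengelT y); last exact: (esym ye).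
    split; first by rewrite -dy.
    by rewrite /= in_itv /= T0 T1.
  - exists k => //; right; rewrite /Ae /cond asboolT; last by split => //; rewrite -dy.
    exists (sengelT y); last exact: (esym ye).
    split; first by rewrite -dy.
    by rewrite /= in_itv /= T0 T1.
have muk k : (lam (Ao k `|` Ae k) <= (if cond k then Pi * lenk k else 0)%:E)%E.
  rewrite /Ao /Ae; case: ifP => hc; last by rewrite setU0 lam0.
  have [k0k Pk] : (k0 <= k)%N /\ P 0%N D (k.*2)%:R by apply/asboolP.
  have k0' : (0 < k)%N := leq_trans k00 k0k.
  have cp : 0 < ((k.*2)%:R : R) by rewrite ltr0n double_gt0.
  have h1 := IH' k (k.*2)%:R k0' (_ : _).
  have h2 := IH' k.+1 (k.*2)%:R isT (_ : _).
  apply: (le_trans (lam_U2 _ _)).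
  apply: (le_trans (leeD (lam_affine _ _ _) (lam_affine _ _ _))); 
    [by rewrite invr_eq0 gt_eqF|by rewrite oppr_eq0 invr_eq0 gt_eqF|].
  rewrite normrN ger0_norm; last by rewrite invr_ge0 ltW.
  rewrite -lenk_split // mulrDr EFinD; apply: leeD; rewrite mulrCA EFinM;
    (apply: lee_wpmul2l; first by rewrite lee_fin invr_ge0 ltW).
  - apply: h1; apply/andP; split => //; rewrite ler_nat; lia.
  - apply: h2; apply/andP; split; rewrite ler_nat; lia.
apply: (le_trans (lam_le sub)).
apply: (le_trans (lam_sig _)).
apply: (@le_trans _ _ (\sum_(k <oo) ((if cond k then Pi * lenk k else 0)%:E))%E).
  apply: lee_nneseries => // i _ _; exact: lam_ge0.
have -> : (\prod_(m < n.+1) q m) * a = Pi * (q 0%N * a).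
  by rewrite big_ord_recl /= /Pi /q' mulrCA mulrA.
apply: eseries_le_bound.
  move=> k; case: ifP => // hc.
  have [k0k _] : (k0 <= k)%N /\ P 0%N D (k.*2)%:R by apply/asboolP.
  by apply: mulr_ge0 => //; apply: lenk_ge0; exact: leq_trans k00 k0k.
move=> M.
have -> : \sum_(k < M) (if cond k then Pi * lenk k else 0) =
          Pi * \sum_(k < M) (if cond k then lenk k else 0).
  by rewrite mulr_sumr; apply: eq_bigr => k _; case: ifP; rewrite ?mulr0.
by apply: ler_wpM2l => //; exact: hq.
Qed.

End D.


Section E.
Variable R : realType.

Lemma od_pos (k : nat) : (0 < k)%N -> (od R k)^-1 \is Num.pos.
Proof. by move=> k0; rewrite posrE invr_gt0 od_gt0. Qed.

Lemma odinv_le (a b : nat) : (0 < a)%N -> (a <= b)%N -> (od R b)^-1 <= (od R a)^-1.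
Proof.
move=> a0 ab; rewrite lef_pV2 ?posrE ?od_gt0 //; last exact: leq_trans ab.
exact: od_le.
Qed.

Lemma sum_lenk_le (S : nat -> bool) (p qq : nat) (M : nat) : (0 < p)%N ->
  (forall k, (k < M)%N -> S k -> (p <= k)%N /\ (k < qq)%N) ->
  \sum_(k < M) (if S k then lenk R k else 0) <=
    (od R p)^-1 - (od R (maxn p (minn M qq)))^-1.
Proof.
move=> p0; elim: M => [|M IH] H.
  by rewrite big_ord0 min0n maxn0 subrr.
rewrite big_ord_recr /=.
have IH' := IH (fun k kM Sk => H k (ltnW kM) Sk).
case: ifP => SM.
  have [pM Mq] := H M (ltnSn M) SM.
  have e1 : maxn p (minn M qq) = M by lia.
  have e2 : maxn p (minn M.+1 qq) = M.+1 by lia.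
  rewrite e2; rewrite e1 in IH'.
  apply: le_trans (lerD IH' (lexx _)) _.
  by rewrite /lenk addrA subrK.
rewrite addr0; apply: le_trans IH' _.
rewrite lerD2l lerN2; apply: odinv_le; lia.
Qed.

Lemma sum_lenk_le2 (S : nat -> bool) (p qq : nat) (M : nat) : (0 < p)%N ->
  (forall k, (k < M)%N -> S k -> (p <= k)%N /\ (k < qq)%N) ->
  \sum_(k < M) (if S k then lenk R k else 0) <=
    (od R p)^-1 - (od R (maxn p qq))^-1.
Proof.
move=> p0 H; apply: le_trans (sum_lenk_le p0 H) _.
rewrite lerD2l lerN2; apply: odinv_le; lia.
Qed.

Lemma sum_lenk_le1 (S : nat -> bool) (p : nat) (M : nat) : (0 < p)%N ->
  (forall k, (k < M)%N -> S k -> (p <= k)%N) ->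
  \sum_(k < M) (if S k then lenk R k else 0) <= (od R p)^-1.
Proof.
move=> p0 H.
have H' : forall k, (k < M)%N -> S k -> (p <= k)%N /\ (k < M)%N.
  by move=> k kM Sk; split => //; exact: H.
apply: le_trans (sum_lenk_le p0 H') _.
rewrite lerBlDr lerDl invr_ge0 ltW // od_gt0 //; lia.
Qed.

Lemma inv_helper (x y c : R) : 0 < x -> 0 < y -> y <= c * x -> x^-1 <= c * y^-1.
Proof.
move=> x0 y0 h; rewrite -subr_ge0.
have -> : c * y^-1 - x^-1 = (c * x - y) / (x * y) by field; rewrite !gt_eqF.
by apply: divr_ge0; [rewrite subr_ge0|apply: mulr_ge0; apply: ltW].
Qed.

Lemma conv_step (t D : R) (k0 M : nat) (P : nat -> R -> Prop) : 0 < t -> (0 < k0)%N ->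
  k0%:R <= D <= (k0.*2)%:R ->
  (forall k, P k D -> t * D <= (k.*2)%:R) ->
  \sum_(k < M) (if `[< (k0 <= k)%N /\ P k D >] then lenk R k else 0) <=
     (8 / t) * (od R k0)^-1.
Proof.
move=> t0 k00 /andP[D1 D2] HP.
have tD0 : 0 <= t * D / 2.
  apply: divr_ge0 => //; apply: mulr_ge0; first exact: ltW.
  by apply: le_trans D1.
have /andP[tr1 tr2] := truncn_itv tD0.
set p := maxn k0 (Num.truncn (t * D / 2)).
have p0 : (0 < p)%N by rewrite /p; lia.
have S1 : \sum_(k < M) (if `[< (k0 <= k)%N /\ P k D >] then lenk R k else 0) <= (od R p)^-1.
  apply: (sum_lenk_le1 (S := fun k => `[< (k0 <= k)%N /\ P k D >])) => // k _ /asboolP [k0k Pk].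
  have hk := HP k Pk.
  have : (Num.truncn (t * D / 2) <= k)%N.
    rewrite -(ler_nat R); apply: le_trans tr1 _.
    by rewrite ler_pdivrMr // [_%:R * 2]mulrC -dblE.
  rewrite /p; lia.
apply: le_trans S1 _.
apply: inv_helper; rewrite ?od_gt0 //.
rewrite mulrAC ler_pdivlMr // odE // odE //.
have hp1 : (k0%:R : R) <= p%:R by rewrite ler_nat /p; lia.
have hp2 : ((Num.truncn (t * D / 2))%:R : R) <= p%:R by rewrite ler_nat /p; lia.
have hk1 : (1 : R) <= k0%:R by rewrite ler1n.
nra.
Qed.

Lemma div_step (ps D : R) (k0 M : nat) (P : nat -> R -> Prop) : 1 <= ps -> (0 < k0)%N ->
  k0%:R <= D <= (k0.*2)%:R ->
  (forall k, P k D -> (k.*2)%:R < ps * D) ->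
  \sum_(k < M) (if `[< (k0 <= k)%N /\ P k D >] then lenk R k else 0) <=
     (1 - (3 * ps)^-1) * (od R k0)^-1.
Proof.
move=> ps1 k00 /andP[D1 D2] HP.
have D0 : 0 <= D by apply: le_trans D1.
have pD0 : 0 <= ps * D / 2.
  by apply: divr_ge0 => //; apply: mulr_ge0 => //; apply: le_trans ps1.
have /andP[tr1 tr2] := truncn_itv pD0.
set qq := (Num.truncn (ps * D / 2)).+1.
apply: le_trans (sum_lenk_le2 (S := fun k => `[< (k0 <= k)%N /\ P k D >]) (qq := qq) k00 _) _.
  move=> k _ /asboolP [k0k Pk]; split => //.
  have hk := HP k Pk.
  rewrite -(ltr_nat R); apply: le_lt_trans tr2.
  rewrite ler_pdivlMr // [_%:R * 2]mulrC -dblE; exact: ltW.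
rewrite mulrBl mul1r lerD2l lerN2.
have ps0 : 0 < ps by apply: lt_le_trans ps1.
have A0 : 0 < od R (maxn k0 qq) by apply: od_gt0; lia.
have B0 : 0 < 3 * ps * od R k0.
  by apply: mulr_gt0; [apply: mulr_gt0 => //|exact: od_gt0].
rewrite -invfM lef_pV2 ?posrE //.
have hk1 : (1 : R) <= k0%:R by rewrite ler1n.
case: (leqP k0 qq) => h.
  rewrite odE ?odE // /qq -natr1.
  rewrite dblE in D2.
  have e1 : ps * D <= ps * (2 * k0%:R) by apply: ler_wpM2l => //; exact: ltW.
  have e2 : 0 <= (ps - 1) * (k0%:R - 1) by apply: mulr_ge0; lra.
  lra.
rewrite odE //.
nra.
Qed.

End E.


Section F.
Variable R : realType.
Variable phi : nat -> R.
Hypothesis phi_pos : forall n : nat, (0 < n)%N -> 0 < phi n.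
Local Notation lam := (@lebesgue_measure R).

Definition Spart (M : nat) : R := \sum_(1 <= n < M) (phi n)^-1.

Lemma Spart_S (M : nat) : Spart M.+1 = Spart M + (if (0 < M)%N then (phi M)^-1 else 0).
Proof.
rewrite /Spart; case: M => [|M] /=.
  by rewrite !big_geq // addr0.
by rewrite big_nat_recr.
Qed.

Lemma Spart_mono (a b : nat) : (a <= b)%N -> Spart a <= Spart b.
Proof.
move=> ab; rewrite -(subnKC ab); elim: (b - a)%N => [|d IH]; first by rewrite addn0.
rewrite addnS Spart_S; apply: le_trans IH _; rewrite lerDl.
case: ifP => // h; rewrite invr_ge0 ltW //; exact: phi_pos.
Qed.

Lemma Spart_tail (N M : nat) : (0 < N)%N ->
  Spart (N + M) - Spart N = \sum_(j < M) (phi (N + j))^-1.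
Proof.
move=> N0; elim: M => [|M IH]; first by rewrite addn0 subrr big_ord0.
rewrite addnS Spart_S big_ord_recr /= -IH ifT; last by lia.
by rewrite addrAC.
Qed.

Lemma series_sup : (\sum_(1 <= n <oo) ((phi n)^-1)%:E)%E =
  ereal_sup (range (fun M => (Spart M)%:E)).
Proof.
have nd : nondecreasing_seq (fun n => \sum_(1 <= k < n) ((phi k)^-1)%:E)%E.
  apply: ereal_nondecreasing_series => k k1 _; rewrite lee_fin invr_ge0 ltW //.
  exact: phi_pos.
have ef : (fun n => \sum_(1 <= k < n) ((phi k)^-1)%:E)%E = (fun M => (Spart M)%:E).
  by apply/funext => M; rewrite /Spart sumEFin.
rewrite (cvg_lim _ (ereal_nondecreasing_cvgn nd)) //.
by rewrite ef.
Qed.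

Lemma unbounded : (\sum_(1 <= n <oo) ((phi n)^-1)%:E = +oo)%E ->
  forall B : R, exists M, B < Spart M.
Proof.
rewrite series_sup => H B; apply/not_existsP => /= h.
have : (ereal_sup (range (fun M => (Spart M)%:E)) <= B%:E)%E.
  apply: ge_ereal_sup => _ [M _ <-]; rewrite lee_fin; move: (h M); rewrite ltNge.
  by move/negP/negPn.
by rewrite H leye_eq.
Qed.

Lemma tail_small : (\sum_(1 <= n <oo) ((phi n)^-1)%:E < +oo)%E ->
  forall e : R, 0 < e -> exists N, (0 < N)%N /\ forall M, Spart (N + M) - Spart N <= e.
Proof.
rewrite series_sup => H e e0.
set s := ereal_sup _ in H.
have s0 : (0 <= s)%E.
  apply: (@le_trans _ _ (Spart 0)%:E); first by rewrite /Spart big_geq.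
  by apply: ereal_sup_ubound; exists 0%N.
have sf : s \is a fin_num by rewrite ge0_fin_numE.
have [_ [N _ <-] hN] := ub_ereal_sup_adherent e0 sf.
exists N.+1; split => // M.
have h1 : ((Spart (N.+1 + M))%:E <= s)%E by apply: ereal_sup_ubound; exists (N.+1 + M)%N.
have h2 : Spart N <= Spart N.+1 by apply: Spart_mono.
rewrite -(fineK sf) in h1 hN.
rewrite lee_fin in h1; move: hN; rewrite -/s -(fineK sf) -EFinB lte_fin => hN.
lra.
Qed.

End F.


Section G.
Variable R : realType.
Local Notation lam := (@lebesgue_measure R).

Lemma prod_pick (n : nat) (c : R) : (0 < n)%N ->
  \prod_(m < n) (if ((m : nat) == n.-1)%N then c else 1) = c.
Proof.
case: n => // n _ /=; rewrite big_ord_recr /= eqxx big1 ?mul1r // => i _.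
by rewrite ifF //; apply/negbTE; rewrite neq_ltn ltn_ord.
Qed.

Lemma prod_le (u : nat -> R) (M : nat) : (forall m, 0 <= u m <= 1) ->
  \prod_(m < M) (1 - u m) <= (1 + \sum_(m < M) u m)^-1.
Proof.
move=> u01; elim: M => [|M IH]; first by rewrite big_ord0 big_ord0 addr0 invr1.
rewrite !big_ord_recr /=.
have S0 : 0 <= \sum_(m < M) u m by apply: sumr_ge0 => m _; case/andP: (u01 m).
have /andP[uM0 uM1] := u01 M.
apply: le_trans (ler_wpM2r _ IH) _; first by rewrite subr_ge0.
rewrite -subr_ge0.
set S := \sum_(m < M) u m in S0 *.
have -> : (1 + (S + u M))^-1 - (1 + S)^-1 * (1 - u M) =
          u M * (S + u M) / ((1 + S) * (1 + (S + u M))).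
  field; apply/andP; split; apply: lt0r_neq0; lra.
apply: divr_ge0; first by apply: mulr_ge0 => //; lra.
apply: mulr_ge0; lra.
Qed.

Variable phi : nat -> R.
Hypothesis phi_pos : forall n : nat, (0 < n)%N -> 0 < phi n.

Definition Eset (n : nat) : set R :=
  [set x | irr x /\ 0 < x < 1 /\ phi n <= sengel_R n x].

Lemma prev_pos (m : nat) (x : R) : irr x -> 0 < x < 1 -> 0 < dprev 1 m x.
Proof. by move=> ix x01; apply: lt_le_trans (dprev_ge1 m ix x01). Qed.

Lemma Eset_bound (n : nat) : (0 < n)%N -> (lam (Eset n) <= (8 / phi n)%:E)%E.
Proof.
move=> n0.
pose P (m : nat) (prev cur : R) := m = n.-1 -> phi n * prev <= cur.
pose q (m : nat) : R := if (m == n.-1)%N then 8 / phi n else 1.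
have pn := phi_pos n0.
have sub : Eset n `<=` Cyl P n 1 `&` `]0%R, ((od R 1)^-1)%R[%classic.
  move=> x [ix [x01 hx]]; split; last by rewrite od1 invr1 /= in_itv.
  apply: link => // m mn em.
  move: hx; rewrite -(prednK n0) -em sengel_RE.
  by rewrite ler_pdivlMr ?prev_pos // mulrC.
apply: (le_trans (lam_le sub)).
have := @cyl_bound R n P q _ _ 1%N 1 isT _.
rewrite prod_pick // od1 invr1 mulr1; apply.
- by move=> m; rewrite /q; case: ifP => _ //; rewrite divr_ge0 // ltW.
- move=> m k0 D k00 hD M; rewrite /q; case: ifP => hm.
    apply: (@conv_step R (phi n) D k0 M (fun k D => P m D (k.*2)%:R)) => //.
    by move=> k; apply; apply/eqP.
  rewrite mul1r; apply: (@sum_lenk_le1 R (fun k => `[< (k0 <= k)%N /\ P m D (k.*2)%:R >])) => //.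
  by move=> k _ /asboolP [].
- by apply/andP; split; [rewrite lexx|rewrite ler1n].
Qed.

Definition Bad (N : nat) : set R :=
  [set x | irr x /\ 0 < x < 1 /\ forall n, (N < n)%N -> ~ (phi n <= sengel_R n x)].

Lemma Bad_bound (N M : nat) : (forall n, (N < n)%N -> 1 <= phi n) ->
  (lam (Bad N) <= ((1 + \sum_(m < M) (if (N <= m)%N then (3 * phi m.+1)^-1 else 0))^-1)%:E)%E.
Proof.
move=> phi1.
pose u (m : nat) : R := if (N <= m)%N then (3 * phi m.+1)^-1 else 0.
pose P (m : nat) (prev cur : R) := (N <= m)%N -> cur < phi m.+1 * prev.
pose q (m : nat) : R := 1 - u m.
have u01 m : 0 <= u m <= 1.
  rewrite /u; case: ifP => h; last by rewrite lexx ler01.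
  have p1 : 1 <= phi m.+1 by apply: phi1; lia.
  have p0 : 0 < 3 * phi m.+1 by apply: mulr_gt0 => //; apply: lt_le_trans p1.
  apply/andP; split; first by rewrite invr_ge0 ltW.
  rewrite invf_le1 //; lra.
have sub : Bad N `<=` Cyl P M 1 `&` `]0%R, ((od R 1)^-1)%R[%classic.
  move=> x [ix [x01 hx]]; split; last by rewrite od1 invr1 /= in_itv.
  apply: link => // m mM hm.
  have := hx m.+1 hm; rewrite sengel_RE.
  move/negP; rewrite -ltNge ltr_pdivrMr ?prev_pos //.
apply: (le_trans (lam_le sub)).
have q0 : forall m, 0 <= q m by move=> m; rewrite /q subr_ge0; case/andP: (u01 m).
have hstep : forall m k0 D, (0 < k0)%N -> k0%:R <= D <= (k0.*2)%:R -> forall M',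
     \sum_(k < M') (if `[< (k0 <= k)%N /\ P m D (k.*2)%:R >] then lenk R k else 0)
       <= q m * (od R k0)^-1.
  move=> m k0 D k00 hD M'; rewrite /q /u; case: ifP => hm.
    apply: (@div_step R (phi m.+1) D k0 M' (fun k D => P m D (k.*2)%:R)) => //.
      by apply: phi1.
    by move=> k; apply.
  rewrite subr0 mul1r; apply: (@sum_lenk_le1 R (fun k => `[< (k0 <= k)%N /\ P m D (k.*2)%:R >])) => //.
  by move=> k _ /asboolP [].
have h1 : (1%N)%:R <= (1 : R) <= ((1%N).*2)%:R.
  by apply/andP; split; [rewrite lexx|rewrite ler1n].
have h := @cyl_bound R M P q q0 hstep 1%N 1 isT h1.
rewrite od1 invr1 mulr1 in h; rewrite od1 invr1; apply: le_trans h _.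
by rewrite lee_fin; apply: prod_le.
Qed.

End G.


Section H.
Variable R : realType.
Variable phi : nat -> R.
Hypothesis phi_pos : forall n : nat, (0 < n)%N -> 0 < phi n.
Local Notation lam := (@lebesgue_measure R).

Lemma sum_u (N1 d : nat) :
  3 * \sum_(m < N1 + d) (if (N1 <= m)%N then (3 * phi m.+1)^-1 else 0) =
  Spart phi (N1 + d).+1 - Spart phi N1.+1.
Proof.
elim: d => [|d IH].
  rewrite addn0 subrr big1 ?mulr0 // => i _; rewrite ifF //.
  by apply/negbTE; rewrite -ltnNge ltn_ord.
rewrite addnS big_ord_recr /= mulrDr IH ifT; last by rewrite leq_addr.
rewrite (Spart_S phi (N1 + d).+1) /=.
have p0 : 0 < phi (N1 + d).+1 by exact: phi_pos.
by field; rewrite gt_eqF.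
Qed.

Lemma Bad0 (N : nat) : (\sum_(1 <= n <oo) ((phi n)^-1)%:E = +oo)%E -> lam (Bad phi N) = 0%E.
Proof.
move=> Hinf.
apply/eqP; rewrite eq_le lam_ge0 andbT.
case: (pselect (exists N0, forall n, (N0 < n)%N -> 1 <= phi n)) => [[N0 hN0]|hno].
  set N1 := maxn N N0.
  have sub : Bad phi N `<=` Bad phi N1.
    move=> x [ix [x01 hx]]; split => //; split => // n hn; apply: hx.
    by apply: leq_ltn_trans hn; rewrite leq_maxl.
  apply: (le_trans (lam_le sub)).
  have phi1 : forall n, (N1 < n)%N -> 1 <= phi n.
    by move=> n hn; apply: hN0; apply: leq_ltn_trans hn; rewrite leq_maxr.
  apply/lee_addgt0Pr => e e0; rewrite add0e.
  have [M' hM'] := unbounded phi_pos Hinf (3 * e^-1 + Spart phi N1.+1).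
  have hM : (N1.+1 < M')%N.
    rewrite ltnNge; apply/negP => h.
    have := Spart_mono phi_pos h.
    have : 0 < 3 * e^-1 by apply: mulr_gt0 => //; rewrite invr_gt0.
    lra.
  have := @Bad_bound R phi N1 (N1 + (M' - N1.+1))%N phi1.
  move/le_trans; apply; rewrite lee_fin.
  have := sum_u N1 (M' - N1.+1).
  have -> : (N1 + (M' - N1.+1)).+1 = M' by rewrite -addSn subnKC // ltnW.
  move=> hS.
  set S := \sum_(m < N1 + (M' - N1.+1)) (if (N1 <= m)%N then (3 * phi m.+1)^-1 else 0) in hS *.
  clearbody S.
  have ei : 0 < e^-1 by rewrite invr_gt0.
  have eS : e^-1 < S.
    move: hS hM'; set a := Spart phi M'; set b := Spart phi N1.+1; move=> hS hM'.
    lra.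
  have S1 : 0 < 1 + S by lra.
  rewrite invf_ple ?posrE //; lra.
have sub : Bad phi N `<=` set0.
  move=> x [ix [x01 hx]].
  have [n hn] : exists n, (N < n)%N /\ phi n < 1.
    apply/not_existsP => H; apply: hno; exists N => n hn.
    rewrite leNgt; apply/negP => h; apply: (H n); split => //.
  case: hn => hn hp; apply: (hx n hn).
  case: n hn hp => // m _ hp.
  by apply: le_trans (R_ge1 m ix x01); exact: ltW.
by apply: (le_trans (lam_le sub)); rewrite lam0.
Qed.

End H.

Unset Implicit Arguments.
Set Strict Implicit.

Theorem theorem1p3 (R : realType) (phi : nat -> R)
    (phi_pos : forall n : nat, (0 < n)%N -> 0 < phi n) :
  ((\sum_(1 <= n <oo) ((phi n)^-1)%:E = +oo)%E ->
     (@lebesgue_measure R (Rset phi) = 1)%E) /\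
  ((\sum_(1 <= n <oo) ((phi n)^-1)%:E < +oo)%E ->
     (@lebesgue_measure R (Rset phi) = 0)%E).
Proof.
split.
- move=> Hinf.
  have l01 : (@lebesgue_measure R `]0%R, 1%R[%classic = 1)%E by rewrite lam_oo.
  apply/eqP; rewrite eq_le; apply/andP; split.
    rewrite -l01; apply: lam_le => x [[x01 _] _].
    by rewrite /= in_itv.
  have cov : `]0%R, 1%R[%classic `<=`
      Rset phi `|` (range ratr `|` \bigcup_N Bad phi N).
    move=> x; rewrite /= in_itv /= => x01.
    case: (pselect (exists q : rat, x = ratr q)) => [[q ->]|ix].
      by right; left; exists q.
    case: (pselect (Rset phi x)) => [h|h]; first by left.
    right; right.
    have : ~ (forall N, exists n, (N < n)%N /\ phi n <= sengel_R n x).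
      by move=> H; apply: h; split.
    move/existsNP => [N hN]; exists N => //; split => //; split => // n hn hp.
    by apply: hN; exists n.
  rewrite -l01; apply: (le_trans (lam_le cov)).
  apply: (le_trans (lam_U2 _ _)).
  rewrite -[X in (_ <= X)%E]adde0; apply: leeD => //.
  apply: (le_trans (lam_U2 _ _)).
  rewrite lebesgue_measure_rat add0e.
  apply: (le_trans (lam_sig _)).
  rewrite eseries0 // => i _ _; exact: Bad0.
- move=> Hfin.
  apply/eqP; rewrite eq_le lam_ge0 andbT.
  apply/lee_addgt0Pr => e e0; rewrite add0e.
  have e80 : 0 < e / 8 by apply: divr_gt0.
  have [N [N0 HN]] := tail_small phi_pos Hfin e80.
  have sub : Rset phi `<=` \bigcup_j Eset phi (N + j).
    move=> x [[x01 ix] H]; have [n [Nn hn]] := H N.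
    exists (n - N)%N => //; rewrite subnKC; last exact: ltnW.
    by split => //; split.
  apply: (le_trans (lam_le sub)); apply: (le_trans (lam_sig _)).
  apply: (@le_trans _ _ (\sum_(j <oo) ((8 / phi (N + j))%:E))%E).
    apply: lee_nneseries => [j _ _|j _]; first exact: lam_ge0.
    by apply: Eset_bound => //; rewrite addn_gt0 N0.
  apply: eseries_le_bound.
    by move=> j; rewrite divr_ge0 // ltW // phi_pos // addn_gt0 N0.
  move=> M; have := HN M; rewrite Spart_tail // -mulr_sumr => h.
  lra.
Qed.
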